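(* Let $X$ be a finite q-cycle set and $x\in X$. Let $C_x:=\bigcup_{n}\mathcal{C}_n$, where $\mathcal{C}_0:=\{x\}$ and $\mathcal{C}_n:=\mathcal{C}_{n-1}\cup\{\sigma_a(b):a,b\in\mathcal{C}_{n-1}\}\cup\{\delta_a(b):a,b\in\mathcal{C}_{n-1}\}$ for $n\ge1$. Then $C_x$ is an indecomposable q-cycle set.
   Context: A q-cycle set is a non-empty set $X$ with operations $\cdot,:$ such that each $\sigma_x:y\mapsto x\cdot y$ is bijective and $(x\cdot y)\cdot(x\cdot z)=(y:x)\cdot(y\cdot z)$, $(x:y):(x:z)=(y\cdot x):(y:z)$, $(x\cdot y):(x\cdot z)=(y:x)\cdot(y:z)$ for all $x,y,z$; $\delta_x(y):=x:y$. A sub-q-cycle set is a subset that is a q-cycle set under the restricted operations. A q-cycle set is indecomposable if it admits no partition into two nonempty sub-q-cycle sets (for finite ones, equivalently the group generated by all $\sigma_y,\delta_y$ acts transitively). *)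

(* Defs.v *)
From mathcomp Require Import all_boot.
Set Implicit Arguments. Unset Strict Implicit. Unset Printing Implicit Defensive.

Section QCycle.
Variables (X : finType) (dot colon : X -> X -> X).

Definition qcycle_set : Prop :=
  (forall x, bijective (dot x)) /\
  (forall x y z, dot (dot x y) (dot x z) = dot (colon y x) (dot y z)) /\
  (forall x y z, colon (colon x y) (colon x z) = colon (dot y x) (colon y z)) /\
  (forall x y z, colon (dot x y) (dot x z) = dot (colon y x) (colon y z)).

Definition sub_qcycle_set (Y : X -> Prop) : Prop :=
  (exists y, Y y) /\
  (forall a b, Y a -> Y b -> Y (dot a b)) /\
  (forall a b, Y a -> Y b -> Y (colon a b)) /\
  (forall y, Y y ->
     (forall a b, Y a -> Y b -> dot y a = dot y b -> a = b) /\
     (forall b, Y b -> exists2 a, Y a & dot y a = b)) /\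
  (forall x y z, Y x -> Y y -> Y z ->
     dot (dot x y) (dot x z) = dot (colon y x) (dot y z)) /\
  (forall x y z, Y x -> Y y -> Y z ->
     colon (colon x y) (colon x z) = colon (dot y x) (colon y z)) /\
  (forall x y z, Y x -> Y y -> Y z ->
     colon (dot x y) (dot x z) = dot (colon y x) (colon y z)).

Definition indecomposable_sub (Y : X -> Prop) : Prop :=
  sub_qcycle_set Y /\
  ~ (exists A B : X -> Prop,
        (forall z, Y z <-> A z \/ B z) /\
        (forall z, ~ (A z /\ B z)) /\
        sub_qcycle_set A /\ sub_qcycle_set B).

Fixpoint Cseq (x : X) (n : nat) : {set X} :=
  match n with
  | 0 => [set x]
  | n'.+1 => let C := Cseq x n' in
      C :|: [set dot a b | a in C, b in C] :|: [set colon a b | a in C, b in C]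
  end.

Definition Cx (x : X) : X -> Prop := fun y => exists n, y \in Cseq x n.

End QCycle.

(* Main.v *)
Require Import Defs.
From mathcomp Require Import all_boot.
From mathcomp Require Import fingroup perm.

Section Aux.
Variables (X : finType) (dot colon : X -> X -> X) (x : X).

Lemma Cseq_ind_sub (P : X -> Prop) :
  P x -> (forall a b, P a -> P b -> P (dot a b)) ->
  (forall a b, P a -> P b -> P (colon a b)) ->
  forall n y, y \in Cseq dot colon x n -> P y.
Proof.
move=> Px Pd Pc; elim=> [|n IH] y /=.
  by rewrite inE => /eqP ->.
rewrite !in_setU => /orP [/orP [H|/imset2P [a b Ha Hb ->]]|/imset2P [a b Ha Hb ->]].
- exact: IH.
- by apply: Pd; apply: IH.
- by apply: Pc; apply: IH.
Qed.

Lemma Cseq_mono m k : Cseq dot colon x m \subset Cseq dot colon x (m + k).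
Proof.
elim: k => [|k IH]; first by rewrite addn0.
apply: subset_trans IH _; rewrite addnS /=.
by apply/subsetP => y Hy; rewrite !in_setU Hy.
Qed.

Lemma Cx_dot a b : Cx dot colon x a -> Cx dot colon x b -> Cx dot colon x (dot a b).
Proof.
move=> [n Ha] [m Hb]; exists (n + m).+1 => /=.
rewrite !in_setU; apply/orP; left; apply/orP; right; apply/imset2P.
exists a b => //.
  exact: (subsetP (Cseq_mono n m)).
rewrite addnC; exact: (subsetP (Cseq_mono m n)).
Qed.

Lemma Cx_colon a b : Cx dot colon x a -> Cx dot colon x b -> Cx dot colon x (colon a b).
Proof.
move=> [n Ha] [m Hb]; exists (n + m).+1 => /=.
rewrite !in_setU; apply/orP; right; apply/imset2P.
exists a b => //.
  exact: (subsetP (Cseq_mono n m)).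
rewrite addnC; exact: (subsetP (Cseq_mono m n)).
Qed.

End Aux.

Theorem mainTheorem11 (X : finType) (dot colon : X -> X -> X) (x : X) :
  qcycle_set dot colon ->
  indecomposable_sub dot colon (Cx dot colon x).
Proof.
move=> [Hbij [H1 [H2 H3]]].
have Cxx : Cx dot colon x x by exists 0; rewrite /= inE.
split.
  split; first by exists x.
  split; first exact: Cx_dot.
  split; first exact: Cx_colon.
  split.
    move=> y Hy; split.
      move=> a b _ _; exact: (bij_inj (Hbij y)).
    move=> b Hb.
    pose p := perm (bij_inj (Hbij y)).
    exists ((p^-1)%g b); last by have := permKV p b; rewrite permE.
    rewrite invg_expg permX.
    elim: (#[p]%g.-1) => [|k IH] //=.
    by rewrite permE; apply: Cx_dot.
  by split; [move=> *; apply: H1 | split; move=> *; [apply: H2 | apply: H3]].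
move=> [A [B [Hpart [Hdisj [[[a Aa] [Ad [Ac _]]] [[b Bb] [Bd [Bc _]]]]]]]].
have: A x \/ B x by apply/Hpart.
case=> [Ax|Bx].
  have AY : forall y, Cx dot colon x y -> A y.
    by move=> y [n Hn]; exact: (@Cseq_ind_sub _ dot colon x A Ax Ad Ac n y Hn).
  have : Cx dot colon x b by apply/Hpart; right.
  by move/AY => Ab; apply: (Hdisj b).
have BY : forall y, Cx dot colon x y -> B y.
  by move=> y [n Hn]; exact: (@Cseq_ind_sub _ dot colon x B Bx Bd Bc n y Hn).
have : Cx dot colon x a by apply/Hpart; left.
by move/BY => Ba; apply: (Hdisj a).
Qed.
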